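(* Let $\mathcal P$ be a compact set of $n\times n$ doubly stochastic matrices and let $P(1),P(2),P(3),\ldots$ be a sequence of matrices from $\mathcal P$. Suppose $j_1<j_2<\cdots$ is an infinite increasing sequence of indices such that each $P(j_r)$ is a Sarymsakov matrix and the set $\bigcup_{r\ge1}\{P(j_r)\}$ is compact. If there exists an integer $T$ such that $j_{r+1}-j_r\le T$ for all $r\ge1$, then $P(k)\cdots P(1)$ converges as $k\to\infty$ to a rank-one matrix $\mathbf 1c^T$ with $c_i\ge0$ and $\sum_i c_i=1$.
   Context: $\mathcal N=\{1,\ldots,n\}$. A matrix is stochastic if it is entrywise nonnegative with row sums $1$, and doubly stochastic if in addition its column sums are $1$. For stochastic $P$ and $\mathcal A\subseteq\mathcal N$, $F_P(\mathcal A)=\{j:\ p_{ij}>0\text{ for some } i\in\mathcal A\}$. A Sarymsakov matrix is a stochastic $P$ such that for any disjoint nonempty $\mathcal A,\tilde{\mathcal A}\subseteq\mathcal N$, either $F_P(\mathcal A)\cap F_P(\tilde{\mathcal A})\neq\emptyset$, or $F_P(\mathcal A)\cap F_P(\tilde{\mathcal A})=\emptyset$ and $|F_P(\mathcal A)\cup F_P(\tilde{\mathcal A})|>|\mathcal A\cup\tilde{\mathcal A}|$. $\mathbf 1$ is the all-ones column vector. *)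

(* Defs.v *)
(* real matrices as functions nat -> nat -> R, only indices < n matter. *)
From Stdlib Require Import Reals List Arith Bool.
Import ListNotations.
Open Scope R_scope.

Definition Mat := nat -> nat -> R.

Fixpoint rsum (n : nat) (f : nat -> R) : R :=
  match n with
  | O => 0
  | S m => rsum m f + f m
  end.

Definition mat_mul (n : nat) (A B : Mat) : Mat :=
  fun i j => rsum n (fun k => A i k * B k j).

Definition mat_id : Mat := fun i j => if Nat.eqb i j then 1 else 0.

Fixpoint left_prod (n : nat) (P : nat -> Mat) (k : nat) : Mat :=
  match k with
  | O => mat_id
  | S m => mat_mul n (P (S m)) (left_prod n P m)
  end.

Definition stochastic (n : nat) (A : Mat) : Prop :=
  (forall i j, (i < n)%nat -> (j < n)%nat -> 0 <= A i j) /\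
  (forall i, (i < n)%nat -> rsum n (fun j => A i j) = 1).

Definition doubly_stochastic (n : nat) (A : Mat) : Prop :=
  stochastic n A /\
  (forall j, (j < n)%nat -> rsum n (fun i => A i j) = 1).

(* subsets of {0,...,n-1} are boolean predicates on nat (values >= n ignored) *)
Definition card (n : nat) (A : nat -> bool) : nat := length (filter A (seq 0 n)).

Definition nonempty (n : nat) (A : nat -> bool) : Prop :=
  exists i, (i < n)%nat /\ A i = true.

Definition disjoint (n : nat) (A B : nat -> bool) : Prop :=
  forall i, (i < n)%nat -> ~ (A i = true /\ B i = true).

Definition posb (x : R) : bool := if Rlt_dec 0 x then true else false.

Definition F (n : nat) (P : Mat) (A : nat -> bool) : nat -> bool :=
  fun j => existsb (fun i => A i && posb (P i j)) (seq 0 n).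

Definition sarymsakov (n : nat) (P : Mat) : Prop :=
  stochastic n P /\
  forall A B : nat -> bool,
    nonempty n A -> nonempty n B -> disjoint n A B ->
    (exists j, (j < n)%nat /\ F n P A j = true /\ F n P B j = true) \/
    ((forall j, (j < n)%nat -> ~ (F n P A j = true /\ F n P B j = true)) /\
     (card n (fun j => F n P A j || F n P B j) > card n (fun i => A i || B i))%nat).

(* (sequential) compactness of a set of n x n real matrices, entrywise topology *)
Definition compact_mats (n : nat) (S : Mat -> Prop) : Prop :=
  forall s : nat -> Mat, (forall k, S (s k)) ->
  exists (phi : nat -> nat) (M : Mat),
    (forall k, (phi k < phi (Datatypes.S k))%nat) /\ S M /\
    forall i j, (i < n)%nat -> (j < n)%nat ->
      Un_cv (fun k => s (phi k) i j) (M i j).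

(* Main.v *)
Require Import Defs.
From Stdlib Require Import Reals List Arith Bool Lra Lia Classical ClassicalDescription.
Open Scope R_scope.

Lemma rsum_ext n f g : (forall k, (k < n)%nat -> f k = g k) -> rsum n f = rsum n g.
Proof. induction n; simpl; intros H; auto. rewrite IHn by (intros; apply H; lia). rewrite H by lia. auto. Qed.

Lemma rsum_plus n f g : rsum n (fun k => f k + g k) = rsum n f + rsum n g.
Proof. induction n; simpl; [lra|]. rewrite IHn; lra. Qed.

Lemma rsum_minus n f g : rsum n (fun k => f k - g k) = rsum n f - rsum n g.
Proof. induction n; simpl; [lra|]. rewrite IHn; lra. Qed.

Lemma rsum_scal n c f : rsum n (fun k => c * f k) = c * rsum n f.
Proof. induction n; simpl; [lra|]. rewrite IHn; lra. Qed.

Lemma rsum_const n c : rsum n (fun _ => c) = INR n * c.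
Proof. induction n; simpl rsum; [simpl; lra|]. rewrite IHn, S_INR; lra. Qed.

Lemma rsum_swap n m f : rsum n (fun i => rsum m (fun j => f i j)) = rsum m (fun j => rsum n (fun i => f i j)).
Proof. induction n; simpl.
- induction m; simpl; auto. rewrite <- IHm. lra.
- rewrite IHn. rewrite <- rsum_plus. auto. Qed.

Lemma rsum_nonneg n f : (forall k, (k < n)%nat -> 0 <= f k) -> 0 <= rsum n f.
Proof. induction n; simpl; intros H; [lra|]. assert (0 <= f n) by (apply H; lia).
 assert (0 <= rsum n f) by (apply IHn; intros; apply H; lia). lra. Qed.

Lemma rsum_ge_term n f k0 : (forall k, (k < n)%nat -> 0 <= f k) -> (k0 < n)%nat -> f k0 <= rsum n f.
Proof. induction n; simpl; intros H Hk; [lia|].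
 assert (0 <= f n) by (apply H; lia).
 assert (0 <= rsum n f) by (apply rsum_nonneg; intros; apply H; lia).
 destruct (Nat.eq_dec k0 n). subst; lra.
 assert (f k0 <= rsum n f) by (apply IHn; [intros; apply H; lia| lia]). lra. Qed.

Lemma rsum_exists_pos n f : rsum n f = 1 -> (forall k, (k < n)%nat -> 0 <= f k) -> exists k, (k < n)%nat /\ 0 < f k.
Proof. intros H1 H2. apply NNPP; intro C.
 assert (rsum n f = rsum n (fun _ => 0)).
 { apply rsum_ext. intros k Hk. destruct (Rle_lt_or_eq_dec _ _ (H2 k Hk)); auto.
   exfalso; apply C; eauto. }
 rewrite rsum_const in H. lra. Qed.

Lemma rsum_cv n (u : nat -> nat -> R) (l : nat -> R) :
  (forall a, (a < n)%nat -> Un_cv (fun k => u a k) (l a)) ->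
  Un_cv (fun k => rsum n (fun a => u a k)) (rsum n l).
Proof. induction n; simpl; intros H.
 - intros e He. exists O. intros. unfold R_dist. rewrite Rminus_diag, Rabs_R0. lra.
 - apply CV_plus. apply IHn; intros; apply H; lia. apply H; lia. Qed.

Lemma rsum_delta n b : (b < n)%nat -> rsum n (fun a => if Nat.eqb a b then 1 else 0) = 1.
Proof. induction n; intros Hb; [lia|]. simpl.
 destruct (Nat.eq_dec b n).
 - subst. rewrite Nat.eqb_refl. rewrite (rsum_ext _ _ (fun _ => 0)). rewrite rsum_const; lra.
   intros k Hk. destruct (Nat.eqb_spec k n); [lia|auto].
 - rewrite IHn by lia. destruct (Nat.eqb_spec n b); [lia|lra]. Qed.

Lemma card_le n A : (card n A <= n)%nat.
Proof. unfold card. induction n; [simpl; auto|]. rewrite seq_S, filter_app, length_app. simpl.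
 destruct (A n); simpl; lia. Qed.

Lemma card_full n A : (forall i, (i < n)%nat -> A i = true) -> card n A = n.
Proof. unfold card. induction n; [simpl; auto|]. intros H. rewrite seq_S, filter_app, length_app. simpl.
 rewrite H by lia. rewrite IHn by (intros; apply H; lia). simpl; lia. Qed.

Lemma posb_true x : posb x = true <-> 0 < x.
Proof. unfold posb. destruct (Rlt_dec 0 x); split; intros; auto; discriminate. Qed.

Lemma cut_lemma n M (S : nat -> bool) : sarymsakov n M ->
  (forall j, (j < n)%nat -> rsum n (fun i => M i j) = 1) ->
  (exists j, (j < n)%nat /\ S j = true) -> (exists l, (l < n)%nat /\ S l = false) ->
  exists i j l, (i < n)%nat /\ (j < n)%nat /\ (l < n)%nat /\ S j = true /\ S l = false /\
    0 < M i j /\ 0 < M i l.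
Proof.
  intros [[Hnn Hrow] Hsar] Hcol [j0 [Hj0 Sj0]] [l0 [Hl0 Sl0]].
  set (A := fun i => existsb (fun j => S j && posb (M i j)) (seq 0 n)).
  set (B := fun i => existsb (fun l => negb (S l) && posb (M i l)) (seq 0 n)).
  assert (HA : forall i, A i = true <-> exists j, (j < n)%nat /\ S j = true /\ 0 < M i j).
  { intros i; unfold A; rewrite existsb_exists; split.
    - intros [x [Hx1 Hx2]]. apply in_seq in Hx1. apply andb_prop in Hx2. destruct Hx2 as [? Hp].
      apply posb_true in Hp. exists x; split; [lia|auto].
    - intros [x [? [? ?]]]. exists x. split. apply in_seq; lia. rewrite H0. simpl. apply posb_true; auto. }
  assert (HB : forall i, B i = true <-> exists j, (j < n)%nat /\ S j = false /\ 0 < M i j).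
  { intros i; unfold B; rewrite existsb_exists; split.
    - intros [x [Hx1 Hx2]]. apply in_seq in Hx1. apply andb_prop in Hx2. destruct Hx2 as [Hs Hp].
      apply posb_true in Hp. exists x; split; [lia|]. destruct (S x); auto; discriminate.
    - intros [x [? [? ?]]]. exists x. split. apply in_seq; lia. rewrite H0. simpl. apply posb_true; auto. }
  destruct (classic (exists i, (i < n)%nat /\ A i = true /\ B i = true)) as [[i [Hi [HAi HBi]]]|Hno].
  { apply HA in HAi. apply HB in HBi. destruct HAi as [j [? [? ?]]]. destruct HBi as [l [? [? ?]]].
    exists i, j, l; repeat split; auto. }
  exfalso.
  assert (Hdis : disjoint n A B). { intros i Hi [H1 H2]. apply Hno; eauto. }
  assert (HneA : nonempty n A).
  { destruct (rsum_exists_pos n (fun i => M i j0)) as [i [Hi Hp]]; auto.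
    exists i; split; auto. apply HA. eauto. }
  assert (HneB : nonempty n B).
  { destruct (rsum_exists_pos n (fun i => M i l0)) as [i [Hi Hp]]; auto.
    exists i; split; auto. apply HB. eauto. }
  destruct (Hsar A B HneA HneB Hdis) as [[j' [Hj' [F1 F2]]] | [_ Hc]].
  - unfold F in F1, F2. apply existsb_exists in F1. apply existsb_exists in F2.
    destruct F1 as [i1 [Hi1 F1]]. destruct F2 as [i2 [Hi2 F2]].
    apply in_seq in Hi1. apply in_seq in Hi2.
    apply andb_prop in F1. apply andb_prop in F2. destruct F1 as [A1 P1]. destruct F2 as [B2 P2].
    apply posb_true in P1. apply posb_true in P2.
    destruct (S j') eqn:Ej.
    + apply (Hdis i2); [lia|]. split; auto. apply HA; exists j'; split; [lia|split;auto].
    + apply (Hdis i1); [lia|]. split; auto. apply HB; exists j'; split; [lia|split;auto].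
  - rewrite (card_full n (fun i => A i || B i)) in Hc.
    + pose proof (card_le n (fun j => F n M A j || F n M B j)). lia.
    + intros i Hi. destruct (rsum_exists_pos n (fun l => M i l)) as [l [Hl Hp]]; [auto| intros; apply Hnn; auto |].
      destruct (S l) eqn:El.
      * rewrite (proj2 (HA i)); auto. exists l; split; [lia|split;auto].
      * rewrite (proj2 (HB i)). apply orb_true_r. exists l; split; [lia|split;auto].
Qed.

Lemma energy n W v : doubly_stochastic n W ->
  rsum n (fun a => (rsum n (fun c => W a c * v c)) ^2) +
  rsum n (fun i => rsum n (fun c => W i c * (v c - rsum n (fun c => W i c * v c))^2))
  = rsum n (fun c => v c ^2).
Proof.
  intros [[Hnn Hrow] Hcol].
  set (m := fun i => rsum n (fun c => W i c * v c)).
  change (rsum n (fun a => m a ^2) + rsum n (fun i => rsum n (fun c => W i c * (v c - m i)^2)) = rsum n (fun c => v c ^2)).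
  rewrite (rsum_ext n (fun i => rsum n (fun c => W i c * (v c - m i)^2))
     (fun i => rsum n (fun c => W i c * v c ^2) - m i ^2)).
  - rewrite rsum_minus. rewrite rsum_swap.
    rewrite (rsum_ext n (fun j => rsum n (fun i => W i j * v j ^2)) (fun j => v j ^2)). lra.
    intros c Hc. rewrite (rsum_ext n _ (fun i => v c ^2 * W i c)) by (intros; ring).
    rewrite rsum_scal, Hcol by auto. ring.
  - intros i Hi.
    rewrite (rsum_ext n _ (fun c => (W i c * v c ^2 + (-2 * m i) * (W i c * v c)) + m i ^2 * W i c)) by (intros; ring).
    rewrite !rsum_plus, !rsum_scal. rewrite Hrow by auto. fold (m i). ring.
Qed.

Lemma Un_cv_ext u v l : (forall k, u k = v k) -> Un_cv u l -> Un_cv v l.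
Proof. intros H Hu e He. destruct (Hu e He) as [N HN]. exists N. intros k Hk. rewrite <- H. auto. Qed.

Lemma Un_cv_sub u l sigma : Un_cv u l -> (forall k, (k <= sigma k)%nat) -> Un_cv (fun k => u (sigma k)) l.
Proof. intros Hu Hs e He. destruct (Hu e He) as [N HN]. exists N. intros k Hk. apply HN. specialize (Hs k). lia. Qed.

Lemma sq_small d e : 0 < e -> d ^ 2 < e ^ 2 -> Rabs d < e.
Proof. intros He H. unfold Rabs. destruct (Rcase_abs d); nra. Qed.

Lemma Un_cv_0_iff u : Un_cv u 0 <-> forall e, 0 < e -> exists N, forall k, (k >= N)%nat -> Rabs (u k) < e.
Proof. unfold Un_cv, R_dist. split; intros H e He; destruct (H e He) as [N HN]; exists N; intros k Hk;
  specialize (HN k Hk); rewrite ?Rminus_0_r in *; auto. Qed.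

Lemma main_cv n (P : nat -> Mat) (j : nat -> nat) b :
  (1 <= n)%nat ->
  (forall k, (1 <= k)%nat -> doubly_stochastic n (P k)) ->
  (1 <= j 1)%nat ->
  (forall r, (1 <= r)%nat -> (j r < j (S r))%nat) ->
  (forall r, (1 <= r)%nat -> sarymsakov n (P (j r))) ->
  compact_mats n (fun M => exists r, (1 <= r)%nat /\ M = P (j r)) ->
  (b < n)%nat ->
  forall a, (a < n)%nat -> Un_cv (fun k => left_prod n P k a b) (/ INR n).
Proof.
  intros Hn HP Hj1 Hjinc Hsar Hcomp Hb.
  assert (HnR : 0 < INR n) by (apply lt_0_INR; lia).
  set (x := fun k a => left_prod n P k a b).
  set (y := fun k a => x k a - / INR n).
  assert (Hxrec : forall k a, x (S k) a = rsum n (fun c => P (S k) a c * x k c)) by reflexivity.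
  assert (Hxsum : forall k, rsum n (fun a => x k a) = 1).
  { induction k.
    - unfold x; simpl. unfold mat_id. apply rsum_delta; auto.
    - rewrite (rsum_ext n _ (fun a => rsum n (fun c => P (S k) a c * x k c))) by (intros; apply Hxrec).
      rewrite rsum_swap. rewrite <- IHk. apply rsum_ext. intros c Hc.
      rewrite (rsum_ext n _ (fun i => x k c * P (S k) i c)) by (intros; ring).
      rewrite rsum_scal. destruct (HP (S k)) as [_ Hcol]; [lia|]. rewrite Hcol by auto. ring. }
  assert (Hyrec : forall k a, (a < n)%nat -> y (S k) a = rsum n (fun c => P (S k) a c * y k c)).
  { intros k a Ha. unfold y. rewrite Hxrec.
    rewrite (rsum_ext n (fun c => P (S k) a c * (x k c - / INR n)) (fun c => P (S k) a c * x k c - / INR n * P (S k) a c)) by (intros; ring).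
    rewrite rsum_minus, rsum_scal. destruct (HP (S k)) as [[_ Hrow] _]; [lia|]. rewrite Hrow by auto. ring. }
  assert (Hysum : forall k, rsum n (fun a => y k a) = 0).
  { intros k. unfold y. rewrite rsum_minus, rsum_const. fold (x k). rewrite Hxsum. field. lra. }
  set (N := fun k => rsum n (fun a => y k a ^ 2)).
  assert (HNnn : forall k, 0 <= N k).
  { intros k. apply rsum_nonneg. intros. apply pow2_ge_0. }
  assert (Henergy : forall k, N (S k) + rsum n (fun i => rsum n (fun c => P (S k) i c * (y k c - y (S k) i) ^ 2)) = N k).
  { intros k. pose proof (energy n (P (S k)) (y k) (HP (S k) ltac:(lia))) as E.
    unfold N. rewrite <- E. f_equal.
    - apply rsum_ext. intros a Ha. rewrite Hyrec; auto.
    - apply rsum_ext. intros i Hi. apply rsum_ext. intros c Hc. rewrite Hyrec; auto. }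
  assert (Hdec : forall k i c, (i < n)%nat -> (c < n)%nat ->
            P (S k) i c * (y k c - y (S k) i) ^ 2 <= N k - N (S k)).
  { intros k i c Hi Hc. rewrite <- (Henergy k).
    destruct (HP (S k)) as [[Hnn _] _]; [lia|].
    assert (rsum n (fun c => P (S k) i c * (y k c - y (S k) i) ^ 2)
       <= rsum n (fun i => rsum n (fun c => P (S k) i c * (y k c - y (S k) i) ^ 2))).
    { apply (rsum_ge_term n (fun i => rsum n (fun c => P (S k) i c * (y k c - y (S k) i) ^ 2))); auto.
      intros; apply rsum_nonneg; intros. apply Rmult_le_pos; [apply Hnn; auto|apply pow2_ge_0]. }
    assert (P (S k) i c * (y k c - y (S k) i) ^ 2 <= rsum n (fun c => P (S k) i c * (y k c - y (S k) i) ^ 2)).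
    { apply (rsum_ge_term n (fun c => P (S k) i c * (y k c - y (S k) i) ^ 2)); auto.
      intros; apply Rmult_le_pos; [apply Hnn; auto|apply pow2_ge_0]. }
    lra. }
  assert (HNdec : forall k, N (S k) <= N k).
  { intros k. pose proof (Henergy k).
    assert (0 <= rsum n (fun i => rsum n (fun c => P (S k) i c * (y k c - y (S k) i) ^ 2))).
    { apply rsum_nonneg; intros; apply rsum_nonneg; intros.
      destruct (HP (S k)) as [[Hnn _] _]; [lia|].
      apply Rmult_le_pos; [apply Hnn; auto|apply pow2_ge_0]. }
    lra. }
  destruct (decreasing_cv N) as [L HL].
  { intros k; apply HNdec. }
  { exists 0. intros v [k Hk]. unfold opp_seq in Hk. subst v. pose proof (HNnn k). lra. }
  assert (Hjge : forall r, (1 <= r)%nat -> (r <= j r)%nat).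
  { induction r; intros Hr; [lia|]. destruct (Nat.eq_dec r 0). subst; lia.
    pose proof (Hjinc r ltac:(lia)). pose proof (IHr ltac:(lia)). lia. }
  destruct (Hcomp (fun k => P (j (S k)))) as [phi [M [Hphi [[r0 [Hr0 HM]] Hconv]]]].
  { intros k. exists (S k). split; [lia|auto]. }
  assert (Hphige : forall k, (k <= phi k)%nat).
  { induction k; [lia|]. pose proof (Hphi k). lia. }
  set (t := fun k => (j (S (phi k)) - 1)%nat).
  assert (Ht : forall k, S (t k) = j (S (phi k))).
  { intros k. unfold t. pose proof (Hjge (S (phi k)) ltac:(lia)). lia. }
  assert (Htge : forall k, (k <= t k)%nat).
  { intros k. unfold t. pose proof (Hjge (S (phi k)) ltac:(lia)). pose proof (Hphige k). lia. }
  assert (HD : Un_cv (fun k => N (t k) - N (S (t k))) 0).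
  { replace 0 with (L - L) by ring. apply CV_minus.
    - apply (Un_cv_sub N L t); auto.
    - apply (Un_cv_sub N L (fun k => S (t k))); auto. }
  assert (Hedge : forall i c, (i < n)%nat -> (c < n)%nat -> 0 < M i c ->
            Un_cv (fun k => y (t k) c - y (S (t k)) i) 0).
  { intros i c Hi Hc HMic. apply Un_cv_0_iff. intros e He.
    set (mu := M i c / 2).
    destruct (Hconv i c Hi Hc mu ltac:(unfold mu; lra)) as [N1 HN1].
    apply Un_cv_0_iff in HD. destruct (HD (mu * e ^ 2) ltac:(apply Rmult_lt_0_compat; [unfold mu; lra| apply pow_lt; lra])) as [N2 HN2].
    exists (Nat.max N1 N2). intros k Hk.
    specialize (HN1 k ltac:(lia)). specialize (HN2 k ltac:(lia)).
    unfold R_dist in HN1. simpl in HN1. rewrite <- Ht in HN1.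
    pose proof (Hdec (t k) i c Hi Hc) as Hd.
    apply sq_small; auto.
    set (d := y (t k) c - y (S (t k)) i) in *.
    set (p := P (S (t k)) i c) in *.
    assert (p >= mu) by (unfold mu in *; apply Rabs_def2 in HN1; lra).
    assert (0 <= d ^ 2) by apply pow2_ge_0.
    assert (N (t k) - N (S (t k)) < mu * e ^ 2) by (apply Rabs_def2 in HN2; lra).
    assert (0 < mu) by (unfold mu; lra).
    nra. }
  set (z := fun k c => y (t k) c).
  assert (Hpair : forall i c c', (i < n)%nat -> (c < n)%nat -> (c' < n)%nat -> 0 < M i c -> 0 < M i c' ->
            Un_cv (fun k => z k c - z k c') 0).
  { intros i c c' Hi Hc Hc' H1 H2. replace 0 with (0 - 0) by ring.
    apply (Un_cv_ext (fun k => (y (t k) c - y (S (t k)) i) - (y (t k) c' - y (S (t k)) i))).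
    { intros k; unfold z; ring. }
    apply CV_minus; apply Hedge; auto. }
  assert (HMs : sarymsakov n M) by (rewrite HM; apply Hsar; auto).
  assert (HMc : forall jj, (jj < n)%nat -> rsum n (fun i => M i jj) = 1).
  { rewrite HM. destruct (HP (j r0)) as [_ Hcol]; [pose proof (Hjge r0 Hr0); lia|]. exact Hcol. }
  assert (Hall : forall c, (c < n)%nat -> Un_cv (fun k => z k c - z k 0%nat) 0).
  { set (Sp := fun c => Un_cv (fun k => z k c - z k 0%nat) 0).
    set (Sb := fun c => if excluded_middle_informative (Sp c) then true else false).
    intros c Hc. apply NNPP. intro Hnc.
    destruct (cut_lemma n M Sb HMs HMc) as [i [jj [l [Hi [Hjj [Hl [S1 [S2 [P1 P2]]]]]]]]].
    - exists 0%nat. split; [lia|]. unfold Sb. destruct (excluded_middle_informative (Sp 0%nat)); auto.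
      exfalso. apply n0. unfold Sp. apply (Un_cv_ext (fun _ => 0)). intros; ring.
      intros e He. exists O. intros. unfold R_dist. rewrite Rminus_diag, Rabs_R0. lra.
    - exists c. split; auto. unfold Sb. destruct (excluded_middle_informative (Sp c)); auto. contradiction.
    - unfold Sb in S1, S2.
      destruct (excluded_middle_informative (Sp jj)) as [Hjj'|]; [|discriminate].
      destruct (excluded_middle_informative (Sp l)) as [|Hl']; [discriminate|].
      apply Hl'. unfold Sp. replace 0 with (0 - 0) by ring.
      apply (Un_cv_ext (fun k => (z k jj - z k 0%nat) - (z k jj - z k l))).
      { intros; ring. }
      apply CV_minus; auto. apply (Hpair i); auto. }
  assert (Hz0 : forall c, (c < n)%nat -> Un_cv (fun k => z k c) 0).
  { intros c Hc.
    apply (Un_cv_ext (fun k => / INR n * rsum n (fun l => (z k c - z k 0%nat) - (z k l - z k 0%nat)))).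
    { intros k. rewrite (rsum_ext n _ (fun l => z k c - z k l)) by (intros; ring).
      rewrite rsum_minus, rsum_const. unfold z. rewrite Hysum. field. lra. }
    replace 0 with (/ INR n * rsum n (fun _ => 0 - 0)).
    2: { rewrite rsum_const. ring. }
    apply CV_mult. { intros e He. exists O. intros. unfold R_dist. rewrite Rminus_diag, Rabs_R0. lra. }
    apply (rsum_cv n (fun l k => (z k c - z k 0%nat) - (z k l - z k 0%nat)) (fun _ => 0 - 0)).
    intros l Hl. apply CV_minus; apply Hall; auto. }
  assert (HNt : Un_cv (fun k => N (t k)) 0).
  { replace 0 with (rsum n (fun _ => 0 * (0 * 1))) by (rewrite rsum_const; ring).
    apply (rsum_cv n (fun a k => y (t k) a ^ 2) (fun _ => 0 * (0 * 1))).
    intros a Ha. simpl. apply CV_mult. apply Hz0; auto. apply CV_mult. apply Hz0; auto.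
    intros e He. exists O. intros. unfold R_dist. rewrite Rminus_diag, Rabs_R0. lra. }
  assert (HL0 : L = 0).
  { apply (UL_sequence (fun k => N (t k))); auto. apply Un_cv_sub; auto. }
  subst L.
  intros a Ha.
  assert (Hya : Un_cv (fun k => y k a) 0).
  { apply Un_cv_0_iff. intros e He.
    destruct (HL (e ^ 2) ltac:(apply pow_lt; lra)) as [K HK]. exists K. intros k Hk.
    apply sq_small; auto. specialize (HK k Hk). unfold R_dist in HK. rewrite Rminus_0_r in HK.
    assert (y k a ^ 2 <= N k).
    { apply (rsum_ge_term n (fun a => y k a ^ 2)); auto. intros; apply pow2_ge_0. }
    pose proof (HNnn k). rewrite Rabs_right in HK by lra. lra. }
  replace (/ INR n) with (0 + / INR n) by ring.
  apply (Un_cv_ext (fun k => y k a + / INR n)). { intros; unfold y, x; ring. }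
  apply CV_plus; auto. intros e He. exists O. intros. unfold R_dist. rewrite Rminus_diag, Rabs_R0. lra.
Qed.

Theorem corollary2 (n : nat) (Pset : Mat -> Prop) (P : nat -> Mat)
  (j : nat -> nat) (T : nat) :
  (1 <= n)%nat ->
  compact_mats n Pset ->
  (forall M, Pset M -> doubly_stochastic n M) ->
  (forall k, (1 <= k)%nat -> Pset (P k)) ->
  (1 <= j 1)%nat ->
  (forall r, (1 <= r)%nat -> (j r < j (S r))%nat) ->
  (forall r, (1 <= r)%nat -> sarymsakov n (P (j r))) ->
  compact_mats n (fun M => exists r, (1 <= r)%nat /\ M = P (j r)) ->
  (forall r, (1 <= r)%nat -> (j (S r) - j r <= T)%nat) ->
  exists c : nat -> R,
    (forall i, (i < n)%nat -> 0 <= c i) /\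
    rsum n c = 1 /\
    forall a b, (a < n)%nat -> (b < n)%nat ->
      Un_cv (fun k => left_prod n P k a b) (c b).
Proof.
  intros Hn _ HPs HP Hj1 Hjinc Hsar Hcomp _.
  assert (HnR : 0 < INR n) by (apply lt_0_INR; lia).
  exists (fun _ => / INR n). split; [|split].
  - intros; left; apply Rinv_0_lt_compat; auto.
  - rewrite rsum_const. field. lra.
  - intros a b Ha Hb. apply (main_cv n P j b); auto.
Qed.
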